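(* Let $k,c$ be integers with $1<c<k$. Then $N(ck+c-k,k)=\gcd(c,k)$.
   Context: For $n>k\ge1$, $N(n,k)$ is the nullity of the $n\times n$ skew-symmetric Toeplitz matrix $A(n,k)$ whose first $k$ superdiagonals have all entries $1$ and whose remaining superdiagonals have all entries $0$. *)

(* Defs.v *)
From mathcomp Require Import all_boot all_order all_algebra.
Set Implicit Arguments. Unset Strict Implicit. Unset Printing Implicit Defensive.
Import GRing.Theory Num.Theory.
Local Open Scope ring_scope.

Definition Amat (n k : nat) : 'M[rat]_n :=
  \matrix_(i < n, j < n)
    (if (i < j)%N && (j - i <= k)%N then 1
     else if (j < i)%N && (i - j <= k)%N then -1 else 0).

Definition N (n k : nat) : nat := (n - \rank (Amat n k))%N.

(* Main.v *)
Require Import Defs.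
From mathcomp Require Import all_boot all_order all_algebra.
From mathcomp Require Import zify ring.
Import GRing.Theory Num.Theory.
Local Open Scope ring_scope.

Definition E (a : nat) : {poly rat} := \poly_(i < a) 1.
Definition S (a b : nat) : {poly rat} := \sum_(t < b) 'X^(a * t).

Lemma coefE a e : (E a)`_e = (e < a)%:R.
Proof. by rewrite coef_poly; case: ifP. Qed.

Lemma E_sum a : E a = \sum_(i < a) 'X^i.
Proof. by rewrite /E poly_def; apply: eq_bigr => i _; rewrite scale1r. Qed.

Lemma XsubE a : 'X^a - 1 = ('X - 1) * E a.
Proof. by rewrite E_sum -subrX1. Qed.

Lemma geo a b : ('X^a - 1) * S a b = 'X^(a * b) - 1.
Proof.
rewrite /S [in RHS]exprM [RHS]subrX1; congr (_ * _); apply: eq_bigr => i _; by rewrite exprM.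
Qed.

Lemma Xsub1_neq0 : ('X - 1 : {poly rat}) != 0.
Proof. by rewrite -[1]/(1%:P) polyXsubC_eq0. Qed.

Lemma E_mul a b : E a * S a b = E (a * b).
Proof.
apply: (mulfI Xsub1_neq0); by rewrite mulrA -!XsubE geo.
Qed.

Lemma dvd_Xn1 a b : ('X^a - 1 : {poly rat}) %| ('X^(a * b) - 1).
Proof. by rewrite -geo dvdp_mulIl. Qed.

Lemma size_E a : size (E a) = a.
Proof.
case: a => [|a]; first by rewrite /E poly_def big_ord0 size_poly0.
have h := XsubE a.+1.
have hE : E a.+1 != 0.
  apply/negP => /eqP h0; move: h; rewrite h0 mulr0 => /eqP; rewrite subr_eq0.
  by move/eqP/(congr1 (size : {poly rat} -> nat)); rewrite size_polyXn size_poly1.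
move: (congr1 (size : {poly rat} -> nat) h).
rewrite size_mul ?Xsub1_neq0 // size_Xn_sub_1 // -[1]/(1%:P) size_XsubC.
move=> H; have h2 : (2%R : nat) = 2%N by []. rewrite h2 in H. move: H; set s := size _ => H. lia.
Qed.

Lemma dvdp_big (d : {poly rat}) (I : finType) (F : I -> {poly rat}) :
  (forall i, d %| F i) -> d %| \sum_i F i.
Proof.
move=> h; apply: (big_ind (fun p => d %| p)) => //.
by move=> x y; apply: dvdp_add.
Qed.


Definition Pp (k : nat) : {poly rat} :=
  \poly_(e < (2 * k).+1) (if (k < e)%N then 1 else if (e < k)%N then -1 else 0).

Lemma Pfact k : Pp k = ('X^(k.+1) - 1) * E k.
Proof.
apply/polyP => e; rewrite /Pp coef_poly mulrBl mul1r coefB coefXnM !coefE.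
case: (ltnP e k) => h1; case: (ltnP e k.+1) => h2; case: (ltnP k e) => h3;
 case: (ltnP e (2*k).+1) => h4; case: (ltnP (e - k.+1) k) => h5;
 try (exfalso; lia); rewrite /=; ring.
Qed.

Lemma mulA_coef n k (u : 'rV[rat]_n) (j : 'I_n) :
  (u *m Amat n k) 0 j = (rVpoly u * Pp k)`_(j + k).
Proof.
rewrite {2}(row_sum_delta u) linear_sum /= mulr_suml coef_sum mxE.
apply: eq_bigr => i _; rewrite linearZ /= rVpoly_delta -scalerAl coefZ coefXnM.
congr (_ * _); rewrite /Amat mxE /Pp coef_poly.
case: (ltnP i j) => h1; case: (leqP (j - i) k) => h2; case: (ltnP j i) => h3;
 case: (leqP (i - j) k) => h4; case: (ltnP (j + k) i) => h5;
 case: (ltnP (j + k - i) (2*k).+1) => h6; case: (ltnP k (j + k - i)) => h7;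
 case: (ltnP (j + k - i) k) => h8; try (exfalso; lia); rewrite /=; ring.
Qed.


Lemma E_dvd_Xsub g : E g %| 'X^g - 1.
Proof. by rewrite XsubE dvdp_mulIr. Qed.

Lemma dvd_E_Xn1 g m : (g %| m)%N -> E g %| 'X^m - 1.
Proof.
move=> h; apply: (dvdp_trans (E_dvd_Xsub g)).
by rewrite -(divnK h) mulnC dvd_Xn1.
Qed.

Lemma SminusE a c : S a.+1 c - E c = \sum_(t < c) 'X^t * ('X^(a * t) - 1).
Proof.
rewrite /S E_sum -sumrB; apply: eq_bigr => t _.
by rewrite mulrBr mulr1 -exprD mulSn.
Qed.

Lemma dvd_SminusE d a c : (d %| a)%N -> E d %| S a.+1 c - E c.
Proof.
move=> h; rewrite SminusE; apply: dvdp_big => t; apply: dvdp_mull.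
by apply: dvd_E_Xn1; apply: dvdn_mulr.
Qed.

Lemma Eg_dvd_G g k c : (g %| c)%N -> (g %| k)%N -> E g %| S k.+1 c.
Proof.
move=> hc hk.
have -> : S k.+1 c = (S k.+1 c - E c) + E c by rewrite subrK.
apply: dvdp_add; first exact: dvd_SminusE.
by rewrite -(divnK hc) mulnC -E_mul dvdp_mulIl.
Qed.


Lemma Phi1_neq0 k : ('X^(k.+1) - 1 : {poly rat}) != 0.
Proof. by rewrite -size_poly_eq0 size_Xn_sub_1. Qed.

Lemma E_neq0 g : (0 < g)%N -> E g != 0.
Proof. by move=> h; rewrite -size_poly_eq0 size_E; case: g h. Qed.

Lemma size_G k c : (0 < c)%N -> size (S k.+1 c) = (k.+1 * c - k)%N.
Proof.
move=> hc.
have h := geo k.+1 c.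
have hG : S k.+1 c != 0.
  apply/negP => /eqP h0; move: h; rewrite h0 mulr0 => /eqP; rewrite eq_sym.
  by rewrite -size_poly_eq0 size_Xn_sub_1 // muln_gt0.
move: (congr1 (size : {poly rat} -> nat) h).
rewrite size_mul ?Phi1_neq0 // !size_Xn_sub_1 ?muln_gt0 //.
move=> H; move: H; set s := size _ => H; lia.
Qed.

Lemma bezout_step k c (H : {poly rat}) : (0 < k)%N ->
  ('X^k - 1) %| ('X^c - 1) * H -> ('X^k - 1) %| ('X^(gcdn c k) - 1) * H.
Proof.
move=> hk hdiv.
have [a _ ha] := Bezoutr c hk.
set g := gcdn c k in ha *.
set b := ((g + a * c) %/ k)%N.
have hb : (k * b = g + c * a)%N by rewrite /b mulnC divnK // mulnC.
have -> : ('X^g - 1) * H = ('X^(k * b) - 1) * H - 'X^g * (('X^(c * a) - 1) * H).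
  by rewrite hb exprD; ring.
apply: dvdp_sub; first by apply: dvdp_mulr; apply: dvd_Xn1.
apply: dvdp_mull; apply: (dvdp_trans hdiv).
by rewrite -geo mulrAC dvdp_mulIl.
Qed.


Lemma size_K k c K : (0 < c)%N -> (0 < gcdn c k)%N -> S k.+1 c = K * E (gcdn c k) ->
  K != 0 /\ (size K + gcdn c k = k.+1 * c - k + 1)%N.
Proof.
move=> hc hg hK.
have hs := @size_G k c hc.
have hK0 : K != 0.
  apply/negP => /eqP h0; move: hs; rewrite hK h0 mul0r size_poly0; nia.
split => //; move: hs; rewrite hK size_mul // ?E_neq0 // size_E.
move: hK0; rewrite -size_poly_eq0; set s := size K => H1 H2; lia.
Qed.

Lemma ker_poly k c (K X : {poly rat}) :
  (1 < c)%N -> (c < k)%N ->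
  S k.+1 c = K * E (gcdn c k) ->
  (size X <= c * k + c - k)%N ->
  (forall j, (j < c * k + c - k)%N -> (X * Pp k)`_(j + k) = 0) ->
  exists2 R : {poly rat}, (size R <= gcdn c k)%N & X = R * K.
Proof.
move=> hc1 hck hK hX hcoef.
set n := (c * k + c - k)%N in hX hcoef.
set g := gcdn c k in hK *.
have hk : (0 < k)%N by lia.
have g_pos : (0 < g)%N by rewrite gcdn_gt0; apply/orP; right.
have hgk : (g %| k)%N by apply: dvdn_gcdr.
set Y := X * Pp k.
have hY : (size Y <= n + 2 * k)%N.
  apply: (leq_trans (size_mul_leq _ _)).
  have := size_poly (2 * k).+1 (fun e => if (k < e)%N then 1 else if (e < k)%N then -1 else 0 : rat).
  rewrite -/(Pp k); move: hX; set s1 := size X; set s2 := size (Pp k) => h1 h2; lia.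
set L := \poly_(i < k) Y`_i.
set H := \poly_(i < k) Y`_(n + k + i).
have hYLH : Y = L + 'X^(n + k) * H.
  apply/polyP => e; rewrite coefD coefXnM !coef_poly.
  case: (ltnP e k) => h1; case: (ltnP e (n + k)) => h2; try (exfalso; lia).
  - by rewrite addr0.
  - by rewrite add0r; have := hcoef (e - k)%N; rewrite subnK //; apply; lia.
  - rewrite add0r; case: (ltnP (e - (n + k)) k) => h3; first by rewrite subnKC.
    have hs : (size Y <= e)%N by apply: (leq_trans hY); lia.
    by move/leq_sizeP: hs; apply.
have hnk : (n + k = k.+1 * c)%N by rewrite /n; nia.
have hPhi : ('X^(k.+1) - 1) %| L + H.
  have h1 : ('X^(k.+1) - 1) %| Y by rewrite /Y Pfact mulrCA dvdp_mulIl.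
  have h2 : ('X^(k.+1) - 1) %| ('X^(n + k) - 1) * H by rewrite hnk dvdp_mulr // dvd_Xn1.
  have -> : L + H = Y - ('X^(n + k) - 1) * H by rewrite hYLH; ring.
  exact: dvdp_sub.
have hLH : L + H = 0.
  apply/eqP; apply: contraT => hne; have := dvdp_leq hne hPhi.
  rewrite size_Xn_sub_1 //.
  have : (size (L + H)%R <= k)%N.
    by apply: (leq_trans (size_add _ _)); rewrite geq_max !size_poly.
  set s := size _ => h1 h2; lia.
have hL : L = - H by apply/eqP; rewrite -addr_eq0 hLH.
have hY2 : Y = ('X^(k.+1) - 1) * (S k.+1 c * H).
  by rewrite hYLH hL mulrA geo -hnk; ring.
have hXE : X * E k = S k.+1 c * H.
  by apply: (mulfI (Phi1_neq0 k)); rewrite -hY2 /Y Pfact; ring.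
have hd1 : E k %| E c * H.
  have h1 : E k %| S k.+1 c * H by rewrite -hXE dvdp_mulIr.
  have h2 : E k %| (S k.+1 c - E c) * H by apply: dvdp_mulr; apply: dvd_SminusE.
  have -> : E c * H = S k.+1 c * H - (S k.+1 c - E c) * H by ring.
  exact: dvdp_sub.
have hd2 : ('X^k - 1) %| ('X^c - 1) * H.
  by rewrite !XsubE -mulrA dvdp_mul2l ?Xsub1_neq0.
have hd3 := @bezout_step k c H hk hd2.
set Q := S g (k %/ g).
have hEk : E k = E g * Q by rewrite /Q E_mul mulnC divnK.
have hQH : Q %| H.
  move: hd3; rewrite -/g !XsubE hEk mulrA dvdp_mul2l //.
  by rewrite mulf_neq0 ?Xsub1_neq0 ?E_neq0.
case/dvdpP: hQH => R hR.
have hXRK : X = R * K.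
  apply: (mulIf (@E_neq0 k hk)); rewrite hXE hK hR hEk; ring.
exists R => //.
have [hK0 hsK] := @size_K k c K (ltn_trans (isT : (0 < 1)%N) hc1) g_pos hK.
have [->|hR0] := eqVneq R 0; first by rewrite size_poly0.
move: hX; rewrite hXRK size_mul // -/n.
move: hR0 hsK; rewrite -size_poly_eq0 /n; set s := size R; set t := size K => h1 h2 h3.
lia.
Qed.


Lemma ker_in k c K r : (1 < c)%N -> (c < k)%N ->
  S k.+1 c = K * E (gcdn c k) -> (r < gcdn c k)%N ->
  (size ('X^r * K)%R <= c * k + c - k)%N /\
  forall j, (j < c * k + c - k)%N -> ('X^r * K * Pp k)`_(j + k) = 0.
Proof.
move=> hc1 hck hK hr.
set g := gcdn c k in hK hr *.
have hk : (0 < k)%N by lia.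
have hc : (0 < c)%N by lia.
have g_pos : (0 < g)%N by rewrite gcdn_gt0; apply/orP; right.
have hgk : (g %| k)%N by apply: dvdn_gcdr.
set Q := S g (k %/ g).
have hEk : E k = E g * Q by rewrite /Q E_mul mulnC divnK.
have hQ0 : Q != 0.
  by apply/negP => /eqP h0; move: (@E_neq0 k hk); rewrite hEk h0 mulr0 eqxx.
have hsQ : (g + size Q = k + 1)%N.
  move: (congr1 (size : {poly rat} -> nat) hEk).
  rewrite size_mul ?E_neq0 // !size_E.
  move: hQ0; rewrite -size_poly_eq0; set s := size Q => h1 h2; lia.
have [hK0 hsK] := @size_K k c K hc g_pos hK.
have hXr0 : ('X^r : {poly rat}) != 0 by rewrite -size_poly_eq0 size_polyXn.
split.
  rewrite size_mul // size_polyXn.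
  move: hsK hK0; rewrite -size_poly_eq0; set s := size K => h1 h2; nia.
move=> j hj.
have -> : 'X^r * K * Pp k = 'X^(k.+1 * c) * ('X^r * Q) - 'X^r * Q.
  rewrite Pfact hEk.
  have -> : 'X^r * K * (('X^(k.+1) - 1) * (E g * Q)) =
            'X^r * (('X^(k.+1) - 1) * (K * E g)) * Q by ring.
  by rewrite -hK geo; ring.
rewrite coefB coefXnM ifT; last by nia.
have hs : (size ('X^r * Q)%R <= j + k)%N.
  rewrite size_mul // size_polyXn; move: hsQ; set s := size Q => h1; lia.
by move/leq_sizeP: hs => ->; rewrite // subr0.
Qed.


Lemma main_rank (k c : nat) (hc1 : (1 < c)%N) (hck : (c < k)%N) :
  N (c * k + c - k) k = gcdn c k.
Proof.
set n := (c * k + c - k)%N.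
set g := gcdn c k.
have hk : (0 < k)%N by lia.
have hc : (0 < c)%N by lia.
have g_pos : (0 < g)%N by rewrite gcdn_gt0; apply/orP; right.
have hgk : (g %| k)%N by apply: dvdn_gcdr.
have hgc : (g %| c)%N by apply: dvdn_gcdl.
case/dvdpP: (@Eg_dvd_G g k c hgc hgk) => K hK.
have [hK0 hsK] := @size_K k c K hc g_pos hK.
pose B : 'M[rat]_(g, n) := \matrix_(r < g) poly_rV ('X^r * K).
have mulB : forall D : 'rV_g, D *m B = poly_rV (rVpoly D * K).
  move=> D; rewrite mulmx_sum_row {2}(row_sum_delta D) linear_sum /= mulr_suml linear_sum /=.
  apply: eq_bigr => i _; rewrite rowK linearZ /= rVpoly_delta -scalerAl linearZ.
  by [].
rewrite /N -mxrank_ker.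
have Bfree : row_free B.
  apply: inj_row_free => v; rewrite mulB => hv.
  have hs : (size (rVpoly v * K)%R <= n)%N.
    apply: (leq_trans (size_mul_leq _ _)).
    have := size_poly g (fun k0 => if insub k0 is Some i then v 0 i else 0).
    rewrite -/(rVpoly v); move: hsK hK0; rewrite -size_poly_eq0 /n.
    set s1 := size K; set s2 := size (rVpoly v) => h1 h2 h3; nia.
  have : rVpoly v * K = 0 by rewrite -(poly_rV_K hs) hv linear0.
  move/eqP; rewrite mulf_eq0 (negbTE hK0) orbF => /eqP h.
  by rewrite -(rVpolyK v) h linear0.
have sub1 : (B <= kermx (Amat n k))%MS.
  apply/sub_kermxP/row_matrixP => r; rewrite row_mul rowK row0; apply/rowP => j.
  rewrite mulA_coef mxE.
  have [hs hc'] := @ker_in k c K r hc1 hck hK (ltn_ord r).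
  by rewrite poly_rV_K //; apply: hc'.
have sub2 : (kermx (Amat n k) <= B)%MS.
  apply/row_subP => i; set u := row i (kermx _).
  have hu : u *m Amat n k = 0 by rewrite /u -row_mul mulmx_ker row0.
  have hcoef : forall j, (j < n)%N -> (rVpoly u * Pp k)`_(j + k) = 0.
    by move=> j hj; rewrite -(@mulA_coef n k u (Ordinal hj)) hu mxE.
  have [R hR hX] := @ker_poly k c K (rVpoly u) hc1 hck hK (size_poly _ _) hcoef.
  by apply/submxP; exists (poly_rV R); rewrite mulB poly_rV_K // -hX rVpolyK.
have hB : \rank B = g := eqP Bfree.
apply/eqP; rewrite eqn_leq; apply/andP; split.
  by apply: leq_trans (mxrankS sub2) _; rewrite hB.
by apply: leq_trans (mxrankS sub1); rewrite hB.
Qed.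

Local Close Scope ring_scope.

Theorem theorem8p8 (k c : nat) (hc1 : (1 < c)%N) (hck : (c < k)%N) :
  N (c * k + c - k) k = gcdn c k.
Proof. exact: main_rank. Qed.
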